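(* Let $A$ be a Noetherian commutative ring with identity, let $A[\mathbf{x}]=A[x_1,\ldots,x_n]$ be equipped with a monomial order, let $I\subset A[\mathbf{x}]$ be an ideal, let $M=A[\mathbf{x}]/I$, and let $p\subset A$ be a prime ideal. The following two statements are equivalent: (a) the natural map $f:A_p\to M_p$ is surjective; (b) $\mathrm{in}(I)_{x_i}\,A_p=(1)$ for each $i=1,\ldots,n$.
   Context: A monomial order $>$ is a total order on monomials such that $\mathbf{x}^E>\mathbf{x}^F$ implies $\mathbf{x}^G\mathbf{x}^E>\mathbf{x}^G\mathbf{x}^F$, and $x_i>1$ for each $i$. $\mathrm{in}(f)$ is the greatest term $c\,\mathbf{x}^E$ ($c\neq0$) of a nonzero polynomial $f$; $\mathrm{in}(I)$ is the ideal generated by all $\mathrm{in}(f)$, $f\in I$. For an ideal $J\subset A[\mathbf{x}]$ and monomial $\mathbf{x}^E$, the coefficient ideal is $J_{\mathbf{x}^E}=(c\in A\mid c\,\mathbf{x}^E\in J)\subset A$; $J_{x_i}$ is the coefficient ideal for the monomial $x_i$, and $J_{x_i}A_p$ its extension to $A_p$. *)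

(* Defs.v *)
From HB Require Import structures.
From mathcomp Require Import all_boot all_algebra.
From mathcomp Require Export mpoly.
Set Implicit Arguments. Unset Strict Implicit. Unset Printing Implicit Defensive.
Import GRing.Theory.
Local Open Scope ring_scope.

Definition is_ideal (R : comNzRingType) (I : R -> Prop) : Prop :=
  [/\ I 0, (forall a b, I a -> I b -> I (a + b)) & (forall r a, I a -> I (r * a))].

Definition ideal_generated_by (R : comNzRingType) (I : R -> Prop) (s : seq R) : Prop :=
  forall x, I x <-> exists c : seq R, x = \sum_(i < size s) c`_i * s`_i.

Definition noetherian (R : comNzRingType) : Prop :=
  forall I : R -> Prop, is_ideal I -> exists s : seq R, ideal_generated_by I s.

Definition is_prime_ideal (R : comNzRingType) (p : R -> Prop) : Prop :=
  [/\ is_ideal p, ~ p 1 & (forall a b, p (a * b) -> p a \/ p b)].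

Definition monomial_order (n : nat) (gt : 'X_{1..n} -> 'X_{1..n} -> Prop) : Prop :=
  [/\ (forall E, ~ gt E E),
      (forall E F G, gt E F -> gt F G -> gt E G),
      (forall E F, E <> F -> gt E F \/ gt F E),
      (forall E F G, gt E F -> gt (mnm_add G E) (mnm_add G F))
    & (forall i : 'I_n, gt (mnm1 i) (@mnm0 n))].

Definition is_init_term (A : comNzRingType) (n : nat)
    (gt : 'X_{1..n} -> 'X_{1..n} -> Prop) (f t : {mpoly A[n]}) : Prop :=
  f != 0 /\
  exists2 E, E \in msupp f &
    (forall F, F \in msupp f -> F <> E -> gt E F) /\ t = f@_E *: 'X_[E].

Definition init_ideal (A : comNzRingType) (n : nat)
    (gt : 'X_{1..n} -> 'X_{1..n} -> Prop) (I : {mpoly A[n]} -> Prop)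
    (g : {mpoly A[n]}) : Prop :=
  exists s : seq ({mpoly A[n]} * {mpoly A[n]}),
    (forall pr, pr \in s -> exists2 f, I f & is_init_term gt f pr.2) /\
    g = \sum_(pr <- s) pr.1 * pr.2.

Definition coef_ideal (A : comNzRingType) (n : nat) (J : {mpoly A[n]} -> Prop)
    (E : 'X_{1..n}) (c : A) : Prop :=
  J (c *: 'X_[E]).

(* Localization A_p: fractions a/s (s not in p); a/s = b/t iff
   exists u not in p with u (t a - s b) = 0. *)
Definition loc_eq (A : comNzRingType) (p : A -> Prop) (a s b t : A) : Prop :=
  exists2 u, ~ p u & u * (t * a - s * b) = 0.

(* Extension J A_p = { a/s | a in J, s not in p }; it is (1) iff it contains 1/1. *)
Definition ext_is_unit (A : comNzRingType) (p : A -> Prop) (J : A -> Prop) : Prop :=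
  exists a s, [/\ J a, ~ p s & loc_eq p a s 1 1].

(* Localization of M = A[x]/I at p: fractions m/s with m in A[x] (representing
   its class in M), s not in p; m/s = m'/s' iff exists u not in p with
   u (s' m - s m') in I (i.e. zero in M). *)
Definition locM_eq (A : comNzRingType) (n : nat) (I : {mpoly A[n]} -> Prop)
    (p : A -> Prop) (m : {mpoly A[n]}) (s : A) (m' : {mpoly A[n]}) (s' : A) : Prop :=
  exists2 u, ~ p u & I (u *: (s' *: m - s *: m')).

Definition loc_map_surjective (A : comNzRingType) (n : nat)
    (I : {mpoly A[n]} -> Prop) (p : A -> Prop) : Prop :=
  forall (m : {mpoly A[n]}) (s : A), ~ p s ->
    exists a t, ~ p t /\ locM_eq I p (a%:MP) t m s.

(* Main.v *)
Require Import Defs.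
From mathcomp Require Import all_boot all_algebra.
From mathcomp Require Import mpoly.
From mathcomp Require Import ring.
Set Implicit Arguments. Unset Strict Implicit. Unset Printing Implicit Defensive.
Import GRing.Theory.
Local Open Scope ring_scope.

Section Work.
Variables (A : comNzRingType) (n : nat) (gt : 'X_{1..n} -> 'X_{1..n} -> Prop)
  (I : {mpoly A[n]} -> Prop) (p : A -> Prop).
Hypothesis Hgt : monomial_order gt.
Hypothesis HI : is_ideal I.
Hypothesis Hp : is_prime_ideal p.

Lemma I0 : I 0. Proof. by case: HI. Qed.
Lemma ID a b : I a -> I b -> I (a + b). Proof. by case: HI => _ H _; apply: H. Qed.
Lemma IM r a : I a -> I (r * a). Proof. by case: HI => _ _ H; apply: H. Qed.
Lemma IN a : I a -> I (- a). Proof. by move=> Ha; rewrite -mulN1r; apply: IM. Qed.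
Lemma IB a b : I a -> I b -> I (a - b). Proof. by move=> Ha Hb; apply: ID => //; apply: IN. Qed.
Lemma IZ c a : I a -> I (c *: a). Proof. by move=> Ha; rewrite -mul_mpolyC; apply: IM. Qed.

Lemma p0 : p 0. Proof. by case: Hp => -[]. Qed.
Lemma pM a b : ~ p a -> ~ p b -> ~ p (a * b).
Proof. by case: Hp => _ _ H Ha Hb /H []. Qed.
Lemma p1 : ~ p 1. Proof. by case: Hp. Qed.

Lemma gt_irr E : ~ gt E E. Proof. by case: Hgt => H _ _ _ _; apply: H. Qed.
Lemma gt_trans E F G : gt E F -> gt F G -> gt E G. Proof. by case: Hgt => _ H _ _ _; apply: H. Qed.
Lemma gt_add E F G : gt E F -> gt (mnm_add G E) (mnm_add G F). Proof. by case: Hgt => _ _ _ H _; apply: H. Qed.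
Lemma gt_var i : gt (mnm1 i) (@mnm0 n). Proof. by case: Hgt => _ _ _ _ H; apply: H. Qed.

Lemma split_var (G : 'X_{1..n}) j : (0 < G j)%N ->
  G = mnm_add (mnm1 j) (mnm_sub G (mnm1 j)).
Proof.
move=> hG; rewrite addmC submK //; rewrite lep1mP -lt0n //.
Qed.

Lemma gt_ge0 (G : 'X_{1..n}) : G = mnm0 \/ gt G mnm0.
Proof.
move: {2}(mdeg G) (leqnn (mdeg G)) => k; elim: k G => [|k IH] G hG.
  by left; apply/eqP; rewrite -mdeg_eq0 -leqn0.
case: (eqVneq G mnm0) => [->|nz]; first by left.
have [j hj] : exists j, (0 < G j)%N.
  apply/existsP; apply: contraNT nz => /existsPn H; apply/eqP/mnmP => j.
  by rewrite mnm0E; move: (H j); rewrite lt0n negbK => /eqP.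
right; rewrite (split_var hj).
have hd : (mdeg (mnm_sub G (mnm1 j)) <= k)%N.
  move: hG; rewrite {1}(split_var hj) mdegD mdeg1 add1n ltnS //.
case: (IH _ hd) => [->|H].
  by rewrite addm0; apply: gt_var.
apply: gt_trans (gt_var j); rewrite -[X in gt _ X]addm0; exact: gt_add.
Qed.

Lemma ge_var (G : 'X_{1..n}) j : (0 < G j)%N -> G = mnm1 j \/ gt G (mnm1 j).
Proof.
move=> hj; rewrite (split_var hj).
case: (gt_ge0 (mnm_sub G (mnm1 j))) => [->|H]; first by left; rewrite addm0.
right; rewrite -[X in gt _ X]addm0; exact: gt_add.
Qed.


Definition Rep (E : 'X_{1..n}) (g : {mpoly A[n]}) :=
  exists h, [/\ I h, h@_E = g@_E & forall G, h@_G != 0 -> G = E \/ gt E G].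

Lemma Rep0 E : Rep E 0.
Proof. exists 0; split; [exact: I0 | by [] | by move=> G; rewrite mcoeff0 eqxx]. Qed.

Lemma RepD E g1 g2 : Rep E g1 -> Rep E g2 -> Rep E (g1 + g2).
Proof.
move=> [h1 [I1 e1 s1]] [h2 [I2 e2 s2]]; exists (h1 + h2); split.
- exact: ID.
- by rewrite !mcoeffD e1 e2.
- move=> G; rewrite mcoeffD; case: (eqVneq (h1@_G) 0) => [->|/s1 //].
  by rewrite add0r => /s2.
Qed.

Lemma Rep_sum (E : 'X_{1..n}) (T : eqType) (r : seq T) (F : T -> {mpoly A[n]}) :
  (forall x, x \in r -> Rep E (F x)) -> Rep E (\sum_(x <- r) F x).
Proof.
elim: r => [|x r IH] H; first by rewrite big_nil; apply: Rep0.
rewrite big_cons; apply: RepD; first by apply: H; rewrite inE eqxx.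
by apply: IH => y hy; apply: H; rewrite inE hy orbT.
Qed.

Lemma Rep_mono E f t a F : I f -> is_init_term gt f t -> Rep E ((a *: 'X_[F]) * t).
Proof.
move=> If [_ [Ef Efin [Hmax ->]]].
set b := f@_Ef.
have -> : (a *: 'X_[F]) * (b *: 'X_[Ef]) = (a * b) *: 'X_[mnm_add F Ef].
  by rewrite -scalerAl -scalerAr mpolyXD scalerA.
case: (eqVneq (mnm_add F Ef) E) => [eE|nE]; last first.
  exists 0; split; [exact: I0 | | by move=> G; rewrite mcoeff0 eqxx].
  by rewrite mcoeff0 mcoeffZ mcoeffX (negbTE nE) mulr0.
exists (a *: (f * 'X_[F])); split.
- by apply: IZ; rewrite mulrC; apply: IM.
- by rewrite -eE !mcoeffZ mcoeffMX mcoeffX eqxx mulr1.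
- move=> G; rewrite mcoeffZ => hG.
  have : (f * 'X_[F])@_G != 0 by apply: contraNneq hG => ->; rewrite mulr0.
  rewrite -mcoeff_msupp (perm_mem (msuppMX _ _)) => /mapP [G' G'in ->].
  case: (eqVneq G' Ef) => [->|ne]; first by left.
  right; rewrite -eE; apply: gt_add; apply: Hmax G'in _; exact/eqP.
Qed.

Lemma Rep_term E f t r : I f -> is_init_term gt f t -> Rep E (r * t).
Proof.
move=> If Ht; rewrite (mpolyE r) mulr_suml; apply: Rep_sum => F _.
exact: (Rep_mono _ _ _ If Ht).
Qed.

Lemma Rep_init E g : init_ideal gt I g -> Rep E g.
Proof.
case=> s [Hs ->]; apply: Rep_sum => pr /Hs [f If Hft]; exact: (Rep_term _ _ If Hft).
Qed.


Definition Good (m : {mpoly A[n]}) := exists a w, ~ p w /\ I (w *: m - a%:MP).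

Lemma Good_I m : I m -> Good m.
Proof. by move=> Im; exists 0, 1; split; [exact: p1 | rewrite scale1r mpolyC0 subr0]. Qed.

Lemma Good_C c : Good c%:MP.
Proof. by exists c, 1; split; [exact: p1 | rewrite scale1r subrr; exact: I0]. Qed.

Lemma Good_D m1 m2 : Good m1 -> Good m2 -> Good (m1 + m2).
Proof.
move=> [a1 [w1 [p1' I1]]] [a2 [w2 [p2' I2]]].
exists (w2 * a1 + w1 * a2), (w1 * w2); split; first exact: pM.
have -> : (w1 * w2) *: (m1 + m2) - (w2 * a1 + w1 * a2)%:MP =
   w2 *: (w1 *: m1 - a1%:MP) + w1 *: (w2 *: m2 - a2%:MP).
  rewrite -!mul_mpolyC !mpolyCD !mpolyCM; ring.
by apply: ID; apply: IZ.
Qed.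

Lemma Good_M m1 m2 : Good m1 -> Good m2 -> Good (m1 * m2).
Proof.
move=> [a1 [w1 [p1' I1]]] [a2 [w2 [p2' I2]]].
exists (a1 * a2), (w1 * w2); split; first exact: pM.
have -> : (w1 * w2) *: (m1 * m2) - (a1 * a2)%:MP =
   (w2 *: m2) * (w1 *: m1 - a1%:MP) + a1%:MP * (w2 *: m2 - a2%:MP).
  rewrite -!mul_mpolyC !mpolyCM; ring.
by apply: ID; apply: IM.
Qed.

Lemma Good_B m1 m2 : Good m1 -> Good m2 -> Good (m1 - m2).
Proof.
move=> G1 G2; apply: Good_D => //; rewrite -mulN1r -mpolyC1 -mpolyCN.
exact: Good_M (Good_C _) G2.
Qed.

Lemma Good_X (m : {mpoly A[n]}) k : Good m -> Good (m ^+ k).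
Proof.
move=> Gm; elim: k => [|k IH]; first by rewrite expr0 -mpolyC1; apply: Good_C.
by rewrite exprS; apply: Good_M.
Qed.

Lemma Good_sum (T : eqType) (r : seq T) (F : T -> {mpoly A[n]}) :
  (forall x, x \in r -> Good (F x)) -> Good (\sum_(x <- r) F x).
Proof.
elim: r => [|x r IH] H; first by rewrite big_nil -mpolyC0; apply: Good_C.
rewrite big_cons; apply: Good_D; first by apply: H; rewrite inE eqxx.
by apply: IH => y hy; apply: H; rewrite inE hy orbT.
Qed.

Lemma Good_mono (G : 'X_{1..n}) :
  (forall j, (0 < G j)%N -> Good 'X_j) -> Good 'X_[G].
Proof.
move=> H; rewrite mpolyXE_id.
apply: (big_ind Good); first by rewrite -mpolyC1; apply: Good_C.
  exact: Good_M.
move=> j _; case: (posnP (G j)) => [->|hj]; last by apply: Good_X; apply: H.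
by rewrite expr0 -mpolyC1; apply: Good_C.
Qed.

Lemma Good_poly m : (forall i, Good 'X_i) -> Good m.
Proof.
move=> H; rewrite (mpolyE m); apply: Good_sum => G _.
rewrite -mul_mpolyC; apply: Good_M; first exact: Good_C.
by apply: Good_mono => j _; apply: H.
Qed.


Section Main.
Hypothesis Hc : forall i : 'I_n, exists2 c, ~ p c & init_ideal gt I (c *: 'X_[mnm1 i]).

Lemma step i : (forall j, gt (mnm1 i) (mnm1 j) -> Good 'X_j) -> Good 'X_i.
Proof.
move=> Hb; have [c pc Ic] := Hc i.
have [h [Ih eh sh]] := Rep_init (mnm1 i) Ic.
rewrite mcoeffZ mcoeffX eqxx mulr1 in eh.
set h' := h - c *: 'X_[mnm1 i].
have Gh' : Good h'.
  rewrite (mpolyE h'); apply: Good_sum => G.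
  rewrite mcoeff_msupp /h' mcoeffB mcoeffZ mcoeffX.
  case: (eqVneq (mnm1 i) G) => [<-|ne]; first by rewrite eh mulr1 subrr eqxx.
  rewrite mulr0 subr0 => hG.
  rewrite -mul_mpolyC; apply: Good_M; first exact: Good_C.
  have gG : gt (mnm1 i) G.
    by case: (sh G hG) => // eG; move: ne; rewrite eG eqxx.
  apply: Good_mono => j hj; apply: Hb.
  by case: (ge_var hj) => [<- //|H]; apply: gt_trans gG H.
have : Good (c *: 'X_i).
  have -> : c *: 'X_i = h - h' by rewrite /h' opprB addrC subrK.
  by apply: Good_B => //; apply: Good_I.
move=> [a [w [pw Iw]]]; exists a, (w * c); split; first exact: pM.
by rewrite -scalerA.
Qed.

Lemma all_good_aux k : forall (S : {set 'I_n}), (#|S| <= k)%N ->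
  forall i, (forall j, gt (mnm1 i) (mnm1 j) -> j \in S) -> Good 'X_i.
Proof.
elim: k => [|k IH] S hS i Hi; apply: step => j hj.
  have := Hi j hj; move: hS; rewrite leqn0 => /eqP/cards0_eq ->.
  by rewrite inE.
have jS := Hi j hj.
apply: (IH (S :\ j)).
  by move: hS; rewrite (cardsD1 j S) jS add1n ltnS.
move=> l hl; rewrite in_setD1; apply/andP; split.
  by apply/eqP => e; move: hl; rewrite e; apply: gt_irr.
by apply: Hi; apply: gt_trans hj hl.
Qed.

Lemma all_good m : Good m.
Proof.
apply: Good_poly => i; apply: (@all_good_aux #|[set: 'I_n]| [set: 'I_n]) => //.
by move=> j _; rewrite inE.
Qed.
End Main.

End Work.

Theorem proposition5p1 (A : comNzRingType) (n : nat)
    (gt : 'X_{1..n} -> 'X_{1..n} -> Prop)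
    (I : {mpoly A[n]} -> Prop) (p : A -> Prop) :
  noetherian A -> monomial_order gt -> is_ideal I -> is_prime_ideal p ->
  (loc_map_surjective I p <->
   (forall i : 'I_n, ext_is_unit p (coef_ideal (init_ideal gt I) (mnm1 i)))).
Proof.
move=> _ Hgt HI Hp; split.
- move=> Hs i.
  have [a [t [pt [u pu Iu]]]] := Hs 'X_i 1 (p1 Hp).
  set w := u * t.
  have pw : ~ p w by apply: pM.
  set f := w *: 'X_[mnm1 i] - (u * a)%:MP.
  have If : I f.
    have -> : f = - (u *: (1 *: (a%:MP) - t *: 'X_i)).
      rewrite /f /w scale1r -!mul_mpolyC !mpolyCM; ring.
    exact: IN.
  have wnz : w != 0 by apply/eqP => w0; apply: pw; rewrite w0; apply: p0 Hp.
  have nzi : (mnm1 i == mnm0) = false.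
    apply/negbTE/eqP => /mnmP /(_ i); rewrite mnm1E mnm0E eqxx //.
  have fi : f@_(mnm1 i) = w.
    by rewrite /f mcoeffB mcoeffZ mcoeffX mcoeffC eqxx nzi mulr1 mulr0 subr0.
  exists w, w; split; last by exists 1; [exact: p1 Hp | rewrite !mul1r mulr1 subrr].
    exists [:: (1, w *: 'X_[mnm1 i])]; split; last by rewrite big_cons big_nil mul1r addr0.
    move=> pr; rewrite inE => /eqP -> /=; exists f => //; split.
      by apply/eqP => f0; move: fi; rewrite f0 mcoeff0 => /esym/eqP; rewrite (negbTE wnz).
    exists (mnm1 i); first by rewrite mcoeff_msupp fi.
    split; last by rewrite fi.
    move=> F; rewrite mcoeff_msupp /f mcoeffB mcoeffZ mcoeffX mcoeffC => hF ne.
    have ne' : (mnm1 i == F) = false by apply/negbTE/eqP => e; apply: ne.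
    move: hF; rewrite ne' mulr0 sub0r oppr_eq0.
    case: (eqVneq F mnm0) => [->|_]; last by rewrite mulr0 eqxx.
    by move=> _; case: Hgt => _ _ _ _; apply.
  exact: pw.
- move=> Hu.
  have Hc : forall i : 'I_n, exists2 c, ~ p c & init_ideal gt I (c *: 'X_[mnm1 i]).
    move=> i; have [a [s [Ia ps [u pu eu]]]] := Hu i.
    exists a => // pa; have : u * a = u * s.
      by apply/eqP; rewrite -subr_eq0 -mulrBr; rewrite mul1r mulr1 in eu; rewrite eu.
    move=> e; have : p (u * s) by rewrite -e; case: Hp => -[_ _ H] _ _; apply: H.
    by case: Hp => _ _ H /H [].
  move=> m s ps.
  have [a [w [pw Iw]]] := all_good Hgt HI Hp Hc m.
  exists a, (w * s); split; first exact: pM.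
  exists 1; first exact: p1 Hp.
  have -> : 1 *: (s *: a%:MP - (w * s) *: m) = (- s) *: (w *: m - a%:MP).
    rewrite -!mul_mpolyC !mpolyCM mpolyCN mpolyC1; ring.
  exact: IZ.
Qed.
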